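(* Let $Y$ be a Banach lattice. Suppose that $F_1,F_2\colon Y\to\mathbb R\cup\{+\infty\}$ satisfy $F_1\ll_{\mathrm Q}F_2$ and that $H\colon Y\to\mathbb R\cup\{+\infty\}$ is totally substitutable. Then $F_1+H\ll_{\mathrm Q}F_2+H$.
   Context: In a Banach lattice, $\wedge,\vee$ are the lattice inf/sup, $\mu^+=\mu\vee0$ and $[a,b]=\{m:a\leq m\leq b\}$. For functions, $G_2\ll_{\mathrm Q}G_1$ means: for all $\mu_1,\mu_2\in Y$ and every $t_{21}\in[0,(\mu_2-\mu_1)^+]$ there exists $t_{12}\in[0,(\mu_1-\mu_2)^+]$ with $G_1(\mu_1+t_{21}-t_{12})+G_2(\mu_2-t_{21}+t_{12})\leq G_1(\mu_1)+G_2(\mu_2)$. $H$ is totally substitutable if for all $\mu_1,\mu_2\in Y$ and all $\mu_1',\mu_2'\in[\mu_1\wedge\mu_2,\mu_1\vee\mu_2]$ with $\mu_1'+\mu_2'=\mu_1+\mu_2$, $H(\mu_1')+H(\mu_2')\leq H(\mu_1)+H(\mu_2)$. *)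

(* Defs.v *)
From HB Require Import structures.
From mathcomp Require Import all_boot all_order all_algebra.
From mathcomp Require Import all_classical all_reals all_analysis.
Set Implicit Arguments. Unset Strict Implicit. Unset Printing Implicit Defensive.
Import Order.TTheory GRing.Theory Num.Theory.
Import numFieldNormedType.Exports.
Local Open Scope ring_scope.

(* A (real) Banach lattice: a complete normed space Y over the reals R,
   with a partial order leY compatible with the vector structure, such that
   meetY / joinY are the lattice inf / sup for leY, and the norm is a
   lattice norm: |x| <= |y| implies ||x|| <= ||y||, with |x| = x v (-x). *)
Definition banach_lattice (R : realType) (Y : completeNormedModType R)
    (leY : Y -> Y -> Prop) (meetY joinY : Y -> Y -> Y) : Prop :=
  (forall x, leY x x) /\
  (forall x y, leY x y -> leY y x -> x = y) /\
  (forall x y z, leY x y -> leY y z -> leY x z) /\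
  (forall x y z, leY x y -> leY (x + z) (y + z)) /\
  (forall (a : R) x y, 0 <= a -> leY x y -> leY (a *: x) (a *: y)) /\
      (forall x y, [/\ leY (meetY x y) x, leY (meetY x y) y &
                      forall z, leY z x -> leY z y -> leY z (meetY x y)]) /\
      (forall x y, [/\ leY x (joinY x y), leY y (joinY x y) &
                      forall z, leY x z -> leY y z -> leY (joinY x y) z]) /\
  (forall x y, leY (joinY x (- x)) (joinY y (- y)) -> `|x| <= `|y|).

Definition posp (Y : zmodType) (joinY : Y -> Y -> Y) (mu : Y) : Y := joinY mu 0.

Definition no_minfty (R : realType) (Y : Type) (F : Y -> \bar R) : Prop :=
  forall y, F y <> -oo%E.

(* G2 <<_Q G1 *)
Definition qll (R : realType) (Y : zmodType) (leY : Y -> Y -> Prop)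
    (joinY : Y -> Y -> Y) (G2 G1 : Y -> \bar R) : Prop :=
  forall mu1 mu2 t21 : Y,
    leY 0 t21 -> leY t21 (posp joinY (mu2 - mu1)) ->
    exists t12 : Y,
      [/\ leY 0 t12, leY t12 (posp joinY (mu1 - mu2)) &
          (G1 (mu1 + t21 - t12)%R + G2 (mu2 - t21 + t12)%R <= G1 mu1 + G2 mu2)%E].

Definition totally_substitutable (R : realType) (Y : zmodType)
    (leY : Y -> Y -> Prop) (meetY joinY : Y -> Y -> Y) (H : Y -> \bar R) : Prop :=
  forall mu1 mu2 mu1' mu2' : Y,
    leY (meetY mu1 mu2) mu1' -> leY mu1' (joinY mu1 mu2) ->
    leY (meetY mu1 mu2) mu2' -> leY mu2' (joinY mu1 mu2) ->
    mu1' + mu2' = mu1 + mu2 ->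
    (H mu1' + H mu2' <= H mu1 + H mu2)%E.

(* Main.v *)
Require Import Defs.
From HB Require Import structures.
From mathcomp Require Import all_boot all_order all_algebra.
From mathcomp Require Import all_classical all_reals all_analysis.
Import Order.TTheory GRing.Theory Num.Theory.
Local Open Scope ring_scope.

Section Aux.
Variables (Y : zmodType) (leY : Y -> Y -> Prop).
Hypothesis tr : forall x y z, leY x y -> leY y z -> leY x z.
Hypothesis ad : forall x y z, leY x y -> leY (x + z) (y + z).

Lemma le0 a b : leY a b <-> leY 0 (b - a).
Proof.
split=> h.
  by have := ad _ _ (- a) h; rewrite subrr.
by have := ad _ _ a h; rewrite add0r subrK.
Qed.

Lemma pos_add x y : leY 0 x -> leY 0 y -> leY 0 (x + y).
Proof.
move=> hx hy; apply: tr hx _.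
by have := ad _ _ x hy; rewrite add0r addrC.
Qed.

Lemma le_eqr x y : leY 0 x -> x = y -> leY 0 y.
Proof. by move=> h <-. Qed.
End Aux.

Section Eqs.
Variables (Y : zmodType).
Lemma e1 (M m1 m2 : Y) : m1 - M = m2 - M - (m2 - m1).
Proof. by rewrite opprB [RHS]addrC addrA subrK. Qed.
Lemma e2 (J m1 m2 : Y) : J - m2 = J - m1 - (m2 - m1).
Proof. by rewrite opprB addrA subrK. Qed.
Lemma f1 (M m1 Q a b : Y) : m1 - M - Q + (Q - b + a) = m1 + a - b - M.
Proof. rewrite !addrA subrK. rewrite -!addrA; congr (_ + _). by rewrite [LHS]addrC [RHS]addrA (addrC a). Qed.
Lemma f2 (J m1 P a b : Y) : J - m1 - P + (P - a + b) = J - (m1 + a - b).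
Proof. rewrite !addrA subrK opprB opprD !addrA. by rewrite [LHS]addrAC [in LHS](addrAC J). Qed.
Lemma f5 (m1 m2 a b : Y) : m1 + a - b + (m2 - a + b) = m1 + m2.
Proof. by rewrite addrACA addNr addr0 addrACA subrr addr0. Qed.
End Eqs.

Theorem proposition2p41 (R : realType) (Y : completeNormedModType R)
    (leY : Y -> Y -> Prop) (meetY joinY : Y -> Y -> Y)
    (F1 F2 H : Y -> \bar R) :
  banach_lattice leY meetY joinY ->
  no_minfty F1 -> no_minfty F2 -> no_minfty H ->
  qll leY joinY F1 F2 ->
  totally_substitutable leY meetY joinY H ->
  qll leY joinY (fun y => (F1 y + H y)%E) (fun y => (F2 y + H y)%E).
Proof.
move=> [_ [_ [tr [ad [_ [mt [jn _]]]]]]] _ _ _ hF hH mu1 mu2 t21 h0 h1.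
have [t12 [g0 g1 hle]] := hF mu1 mu2 t21 h0 h1.
exists t12; split => //.
set P := posp joinY (mu2 - mu1) in h1.
set Q := posp joinY (mu1 - mu2) in g1.
set J := joinY mu1 mu2.
set M := meetY mu1 mu2.
have [J1 J2 _] := jn mu1 mu2.
have [M1 M2 _] := mt mu1 mu2.
have [_ _ Plub] := jn (mu2 - mu1) 0.
have [_ _ Qlub] := jn (mu1 - mu2) 0.
have L := @le0 _ _ ad.
have PJ : leY P (J - mu1).
  apply: Plub; apply/L.
    by apply: le_eqr (proj1 (L _ _) J2) _; exact: e2.
  by rewrite subr0; exact: (proj1 (L _ _) J1).
have PM : leY P (mu2 - M).
  apply: Plub; apply/L.
    by apply: le_eqr (proj1 (L _ _) M1) _; exact: e1.
  by rewrite subr0; exact: (proj1 (L _ _) M2).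
have QJ : leY Q (J - mu2).
  apply: Qlub; apply/L.
    by apply: le_eqr (proj1 (L _ _) J1) _; exact: e2.
  by rewrite subr0; exact: (proj1 (L _ _) J2).
have QM : leY Q (mu1 - M).
  apply: Qlub; apply/L.
    by apply: le_eqr (proj1 (L _ _) M2) _; exact: e1.
  by rewrite subr0; exact: (proj1 (L _ _) M1).
move/L: h0; rewrite subr0 => h0.
move/L: g0; rewrite subr0 => g0.
move/L: h1 => h1; move/L: g1 => g1.
move/L: PJ => PJ; move/L: PM => PM; move/L: QJ => QJ; move/L: QM => QM.
have PA := @pos_add _ _ tr ad.
subst P Q J M.
have hs : (H (mu1 + t21 - t12)%R + H (mu2 - t21 + t12)%R <= H mu1 + H mu2)%E.
  apply: hH; [apply/L|apply/L|apply/L|apply/L|].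
  - apply: le_eqr (PA _ _ QM (PA _ _ g1 h0)) _.
    exact: f1.
  - apply: le_eqr (PA _ _ PJ (PA _ _ h1 g0)) _.
    exact: f2.
  - apply: le_eqr (PA _ _ PM (PA _ _ h1 g0)) _.
    by rewrite f1 (addrAC mu2).
  - apply: le_eqr (PA _ _ QJ (PA _ _ g1 h0)) _.
    by rewrite f2 (addrAC mu2).
  - exact: f5.
rewrite addeACA [X in (_ <= X)%E]addeACA.
exact: leeD.
Qed.
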